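(* Define the affine maps of $\mathbb{C}$ \[ L_0(t) = \tfrac{9}{10} t - \tfrac{9}{100},\quad L_1(t) = \tfrac{9}{10} t - \tfrac{9i}{100},\quad L_2(t) = \tfrac{9}{10} t + \tfrac{9}{100},\quad L_3(t) = \tfrac{9}{10} t + \tfrac{9i}{100}. \] Then for every $t \in \mathbb{D}(0,1/2)$ there exist $\tau \in \mathbb{D}(0, 0.497)$ and $j \in \{0,1,2,3\}$ such that $t = L_j(\tau)$.
   Context: $\mathbb{D}(z,r)\subset\mathbb{C}$ denotes the closed disk of center $z$ and radius $r$. *)

(* Defs.v *)
From Stdlib Require Import Reals.
From Coquelicot Require Import Coquelicot.
Open Scope R_scope.

Definition cdisk (z : C) (r : R) (w : C) : Prop := Cmod (w - z)%C <= r.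

Definition Lmap (j : nat) (t : C) : C :=
  match j with
  | 0%nat => (RtoC (9/10) * t + RtoC (-(9/100)))%C
  | 1%nat => (RtoC (9/10) * t + (0, -(9/100))%R)%C
  | 2%nat => (RtoC (9/10) * t + RtoC (9/100))%C
  | _ => (RtoC (9/10) * t + (0, 9/100)%R)%C
  end.

(* Main.v *)
Require Import Defs.
From Stdlib Require Import Reals Lra Psatz.
From Coquelicot Require Import Coquelicot.
Open Scope R_scope.

Lemma key (x y : R) : x >= Rabs y -> x*x + y*y <= 1/4 ->
  x*x + y*y - 18/100*x + 81/10000 <= 81/100 * (497/1000 * (497/1000)).
Proof.
  intros H1 H2.
  assert (Hy : y*y <= x*x).
  { destruct (Rle_dec 0 y); [rewrite Rabs_right in H1 by lra|rewrite Rabs_left in H1 by lra]; nra. }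
  assert (0 <= x) by (pose proof (Rabs_pos y); lra).
  destruct (Rle_dec (3224/10000) x) as [h|h]; [lra|].
  assert (x * (3224/10000 - x) >= 0) by (apply Rle_ge, Rmult_le_pos; lra).
  lra.
Qed.

Lemma cmod_le (a b r : R) : 0 <= r -> a*a + b*b <= r*r -> Cmod (a, b) <= r.
Proof.
  intros Hr H. unfold Cmod. simpl.
  rewrite <- (sqrt_square r) by lra. apply sqrt_le_1_alt. lra.
Qed.

Theorem mainTheorem5 :
  forall t : C, cdisk 0%C (1/2) t ->
  exists (tau : C) (j : nat),
    (j < 4)%nat /\ cdisk 0%C (497/1000) tau /\ t = Lmap j tau.
Proof.
  intros [x y] Ht. unfold cdisk in *.
  assert (Hxy : x*x + y*y <= 1/4).
  { unfold Cmod in Ht. simpl in Ht.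
    match type of Ht with sqrt ?u <= _ => assert (E: u = x*x+y*y) by ring; rewrite E in Ht end.
    assert (0 <= x*x+y*y) by nra.
    pose proof (sqrt_sqrt _ H). pose proof (sqrt_pos (x*x+y*y)). nra. }
  assert (Hc : forall a b : R, 0 = 0 -> True) by auto.
  destruct (Rle_dec (Rabs y) x) as [H1|H1].
  - exists ((x - 9/100)*(10/9), y*(10/9)), 2%nat. split; [lia|split].
    + unfold Cminus, Copp, Cplus. simpl. apply cmod_le; [lra|].
      pose proof (key x y ltac:(lra) Hxy). nra.
    + unfold Lmap, RtoC, Cmult, Cplus. apply injective_projections; simpl; field.
  - destruct (Rle_dec (Rabs y) (-x)) as [H2|H2].
    + exists ((x + 9/100)*(10/9), y*(10/9)), 0%nat. split; [lia|split].
      * unfold Cminus, Copp, Cplus. simpl. apply cmod_le; [lra|].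
        pose proof (key (-x) y ltac:(lra) ltac:(nra)). nra.
      * unfold Lmap, RtoC, Cmult, Cplus. apply injective_projections; simpl; field.
    + assert (Hx : Rabs x < Rabs y).
      { destruct (Rle_dec 0 x); [rewrite (Rabs_right x) by lra|rewrite (Rabs_left x) by lra]; lra. }
      destruct (Rle_dec 0 y) as [H3|H3].
      * rewrite (Rabs_right y) in Hx by lra.
        exists (x*(10/9), (y - 9/100)*(10/9)), 3%nat. split; [lia|split].
        -- unfold Cminus, Copp, Cplus. simpl. apply cmod_le; [lra|].
           pose proof (key y x ltac:(lra) ltac:(nra)). nra.
        -- unfold Lmap, RtoC, Cmult, Cplus. apply injective_projections; simpl; field.
      * rewrite (Rabs_left y) in Hx by lra.
        exists (x*(10/9), (y + 9/100)*(10/9)), 1%nat. split; [lia|split].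
        -- unfold Cminus, Copp, Cplus. simpl. apply cmod_le; [lra|].
           pose proof (key (-y) x ltac:(lra) ltac:(nra)). nra.
        -- unfold Lmap, RtoC, Cmult, Cplus. apply injective_projections; simpl; field.
Qed.
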